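(* There is a constant $C$ such that for all $u,v\in\mathbb{R}$, \[\int_0^\pi e^{-(u-v\cos s)^2}\frac{ds}{\pi}\le\frac{C}{\sqrt{(|u+v|+1)(|u-v|+1)}}.\] *)

(* Defs.v *)
From Stdlib Require Import Reals.
From Coquelicot Require Import Coquelicot.

(* Main.v *)
Require Import Defs.
From Stdlib Require Import Reals Lra Psatz.
From Coquelicot Require Import Coquelicot.
Open Scope R_scope.

Lemma exp_neg_le (y : R) : 0 <= y -> exp (- y) <= / (1 + y).
Proof.
  intros Hy. rewrite exp_Ropp. apply Rinv_le_contravar. lra.
  apply exp_ineq1_le.
Qed.

Lemma exp_neg_le1 (y : R) : 0 <= y -> exp (- y) <= 1.
Proof.
  intros Hy. rewrite <- exp_0. destruct (Req_dec y 0). subst; rewrite Ropp_0; lra.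
  left; apply exp_increasing; lra.
Qed.

Lemma inv_helper (y X : R) : 0 <= y -> 0 <= X -> 1 + X <= 64 * (1 + y) -> / (1 + y) <= 64 / (1 + X).
Proof.
  intros Hy HX H. apply (Rmult_le_reg_r (1+y)); [lra|]. rewrite Rinv_l by lra.
  apply (Rmult_le_reg_r (1+X)); [lra|]. unfold Rdiv.
  replace (64 * / (1 + X) * (1 + y) * (1 + X)) with (64 * (1+y)) by (field; lra). lra.
Qed.

Lemma one_helper (X : R) : 0 <= X <= 63 -> 1 <= 64 / (1 + X).
Proof.
  intros H. apply (Rmult_le_reg_r (1+X)); [lra|]. unfold Rdiv.
  rewrite Rmult_assoc, Rinv_l by lra. lra.
Qed.

Lemma key (a b : R) : exists t0, forall t, 0 <= t <= 1 ->
  exp (- ((a + b * t^2)^2 / 4)) <=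
  64 / (1 + (Rabs a + 1) * (Rabs b + 1) * (t - t0)^2).
Proof.
  set (A := Rabs a). set (B := Rabs b).
  assert (HA : 0 <= A) by apply Rabs_pos.
  assert (HB : 0 <= B) by apply Rabs_pos.
  assert (Ha2 : a^2 = A^2) by (unfold A; rewrite <- (pow2_abs a); reflexivity).
  assert (Hb2 : b^2 = B^2) by (unfold B; rewrite <- (pow2_abs b); reflexivity).
  assert (Hab : Rabs (a*b) = A * B) by (unfold A, B; apply Rabs_mult).
  assert (Hy0 : forall t, 0 <= (a + b * t^2)^2 / 4) by (intros t; apply Rmult_le_pos; [apply pow2_ge_0 | lra]).
  destruct (Rle_or_lt 1 A) as [A1|A1]; destruct (Rle_or_lt 1 B) as [B1|B1].
  - destruct (Rle_or_lt 0 (a*b)) as [ab|ab].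
    +
      exists 0. intros t Ht.
      assert (ab' : a * b = A * B) by (rewrite <- Hab; rewrite Rabs_right; lra).
      eapply Rle_trans. apply exp_neg_le. apply Hy0.
      assert (Hy : (a + b*t^2)^2/4 >= A*B*t^2/2).
      { assert ((a + b*t^2)^2 = a^2 + 2*(a*b)*t^2 + b^2*t^4) by ring.
        rewrite H, ab', Ha2, Hb2. nra. }
      assert (HK: (A+1)*(B+1) <= 4*A*B) by nra.
      replace (t - 0) with t by ring.
      assert (0 <= t^2) by nra.
      apply inv_helper; [apply Hy0 | nra | nra].
    +
      assert (ab' : a * b = - (A * B)) by (rewrite <- Hab; rewrite Rabs_left; lra).
      exists (sqrt (A / B)). intros t Ht.
      set (t0 := sqrt (A / B)).
      assert (Ht0 : 0 <= t0) by apply sqrt_pos.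
      assert (Ht02 : t0 * t0 = A / B) by (apply sqrt_sqrt; apply Rdiv_le_0_compat; lra).
      assert (HAt : A = B * (t0 * t0)) by (rewrite Ht02; field; lra).
      eapply Rle_trans. apply exp_neg_le. apply Hy0.
      assert (Hy : (a + b*t^2)^2/4 >= A*B*(t-t0)^2/4).
      { assert ((a + b*t^2)^2 = a^2 + 2*(a*b)*t^2 + b^2*t^4) by ring.
        rewrite H, ab', Ha2, Hb2.
        assert (E: A ^ 2 + 2 * - (A * B) * t ^ 2 + B ^ 2 * t ^ 4 = (B*(t0-t)*(t0+t))^2).
        { rewrite HAt. ring. }
        rewrite E.
        assert (A * B * (t - t0)^2 = (B*(t0-t)*t0)^2) by (rewrite HAt; ring).
        rewrite H0.
        assert (Rabs (B*(t0-t)*t0) <= Rabs (B*(t0-t)*(t0+t))).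
        { rewrite !Rabs_mult. rewrite (Rabs_right t0) by lra. rewrite (Rabs_right (t0+t)) by lra.
          apply Rmult_le_compat_l. apply Rmult_le_pos; apply Rabs_pos. lra. }
        assert (forall x, x^2 = Rabs x ^2) by (intros; rewrite pow2_abs; auto).
        rewrite (H2 (B * (t0 - t) * t0)), (H2 (B * (t0 - t) * (t0 + t))).
        assert (0 <= Rabs (B * (t0 - t) * t0)) by apply Rabs_pos.
        nra. }
      assert (HK: (A+1)*(B+1) <= 4*A*B) by nra.
      set (d := (t - t0)^2).
      assert (0 <= d) by (unfold d; apply pow2_ge_0).
      assert (HKd : (A+1)*(B+1)*d <= 4*A*B*d) by (apply Rmult_le_compat_r; lra).
      assert (0 <= (A+1)*(B+1)*d) by (apply Rmult_le_pos; nra).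
      apply inv_helper; [apply Hy0 | lra | ]. fold d in Hy. lra.
  -
    exists 0. intros t Ht. replace (t - 0) with t by ring.
    assert (Ht2 : 0 <= t^2 <= 1) by nra.
    destruct (Rle_or_lt A 2) as [A2|A2].
    + eapply Rle_trans. apply exp_neg_le1. apply Hy0.
      apply one_helper. split; [apply Rmult_le_pos; [nra|apply pow2_ge_0] | ].
      assert (P : (A+1)*(B+1) <= 6) by nra.
      assert ((A+1)*(B+1)*t^2 <= 6 * 1) by (apply Rmult_le_compat; nra). lra.
    + eapply Rle_trans. apply exp_neg_le. apply Hy0.
      assert (Hbt : Rabs (b * t^2) <= 1).
      { rewrite Rabs_mult. rewrite (Rabs_right (t^2)) by lra. fold B. nra. }
      assert (Hy : A / 2 <= Rabs (a + b * t^2)).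
      { pose proof (Rabs_triang_inv a (- (b*t^2))). rewrite Rabs_Ropp in H.
        replace (a - - (b * t^2)) with (a + b*t^2) in H by ring. fold A in H. lra. }
      assert (Hy2 : A^2/16 <= (a + b*t^2)^2/4).
      { rewrite <- (pow2_abs (a + b*t^2)). nra. }
      assert (HK1 : (A+1)*(B+1)*t^2 <= (A+1)*(B+1)*1) by (apply Rmult_le_compat_l; nra).
      assert (HK2 : (A+1)*(B+1) <= 2*(A+1)) by nra.
      apply inv_helper; [apply Hy0 | apply Rmult_le_pos; [nra|apply pow2_ge_0] | nra].
  -
    exists 0. intros t Ht. replace (t - 0) with t by ring.
    assert (Ht2 : 0 <= t^2 <= 1) by nra.
    assert (HK : (A+1)*(B+1) <= 4*B) by nra.
    destruct (Rle_or_lt (B*t^2) 2) as [S|S].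
    + eapply Rle_trans. apply exp_neg_le1. apply Hy0.
      apply one_helper. split; [apply Rmult_le_pos; [nra|apply pow2_ge_0] | ].
      assert ((A+1)*(B+1)*t^2 <= 4*B*t^2) by (apply Rmult_le_compat_r; nra). lra.
    + eapply Rle_trans. apply exp_neg_le. apply Hy0.
      assert (Hbt : Rabs (b * t^2) = B * t^2).
      { rewrite Rabs_mult. rewrite (Rabs_right (t^2)) by lra. fold B. auto. }
      set (z := B * t^2 / 2).
      assert (Hy : z <= Rabs (a + b * t^2)).
      { pose proof (Rabs_triang_inv (b*t^2) (- a)). rewrite Rabs_Ropp in H.
        replace (b*t^2 - - a) with (a + b*t^2) in H by ring. fold A in H. unfold z. lra. }
      assert (Hz1 : 1 <= z) by (unfold z; lra).
      assert (Hy2 : z/4 <= (a + b*t^2)^2/4).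
      { rewrite <- (pow2_abs (a + b*t^2)). nra. }
      assert ((A+1)*(B+1)*t^2 <= 4*B*t^2) by (apply Rmult_le_compat_r; nra).
      assert (4*B*t^2 = 8*z) by (unfold z; field).
      apply inv_helper; [apply Hy0 | apply Rmult_le_pos; [nra|apply pow2_ge_0] | lra].
  -
    exists 0. intros t Ht. replace (t - 0) with t by ring.
    eapply Rle_trans. apply exp_neg_le1. apply Hy0.
    apply one_helper. split; [apply Rmult_le_pos; [nra|apply pow2_ge_0] | ].
    assert (P : (A+1)*(B+1) <= 4) by nra.
    assert ((A+1)*(B+1)*t^2 <= 4 * 1) by (apply Rmult_le_compat; nra). lra.
Qed.
Definition dfK (K t0 s : R) := / (1 + K * (sin (s/2) / cos (s/2) - t0)^2) * / (2 * (cos (s/2))^2).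
Definition FK (K t0 s : R) := atan (sqrt K * (sin (s/2) / cos (s/2) - t0)) / sqrt K.

Lemma der (K t0 s : R) : 0 < K -> cos (s/2) <> 0 -> is_derive (FK K t0) s (dfK K t0 s).
Proof.
  intros HK Hc. unfold FK, dfK.
  assert (Hs := sin2_cos2 (s/2)). unfold Rsqr in Hs.
  assert (0 < sqrt K) by (apply sqrt_lt_R0; auto).
  assert (H0 : sqrt K * sqrt K = K) by (apply sqrt_sqrt; lra).
  auto_derive; change (s * / 2) with (s / 2) in *;
  set (c := cos (s/2)) in *; set (si := sin (s/2)) in *.
  - auto.
  - replace (1 + sqrt K * (si * / c + - t0) * (sqrt K * (si * / c + - t0) * 1))
      with (1 + (sqrt K * sqrt K) * (si / c - t0)^2) by (unfold Rdiv; ring).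
    rewrite H0.
    replace (1 * / 2 * c * / c + si * (- (1 * / 2 * - si) * / (c * c)))
      with (/ (2 * c^2)).
    2:{ field_simplify; auto. replace (c^2 + si^2) with 1 by (rewrite <- Hs; ring). field. auto. }
    assert (0 <= (si / c - t0)^2) by apply pow2_ge_0.
    field. split; [auto|]. split; [|lra].
    assert (0 < c * c) by (apply Rsqr_pos_lt; auto).
    assert (0 <= (si - t0 * c)^2) by apply pow2_ge_0. nra.
Qed.

Lemma exp_mono (x y : R) : x <= y -> exp x <= exp y.
Proof. intros H. destruct (Req_dec x y). subst; lra. left; apply exp_increasing; lra. Qed.

Lemma integrand_cont (u v s : R) : continuous (fun s => exp (- (u - v * cos s)^2) / PI) s.
Proof.
  apply (@ex_derive_continuous R_AbsRing R_NormedModule). auto_derive. auto.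
Qed.

Lemma half (u v : R) :
  RInt (fun s => exp (- (u - v * cos s)^2) / PI) 0 (PI/2)
  <= 128 / sqrt ((Rabs (u - v) + 1) * (Rabs (u + v) + 1)).
Proof.
  destruct (key (u - v) (u + v)) as [t0 Ht0].
  set (K := (Rabs (u - v) + 1) * (Rabs (u + v) + 1)) in *.
  assert (HK : 0 < K) by (unfold K; pose proof (Rabs_pos (u-v)); pose proof (Rabs_pos (u+v)); nra).
  assert (Hsq : 0 < sqrt K) by (apply sqrt_lt_R0; auto).
  pose proof PI_RGT_0 as HPI.
  assert (Hc : forall s, 0 <= s <= PI/2 -> 0 < cos (s/2)).
  { intros s Hs. apply cos_gt_0; lra. }
  assert (Hder : forall s, Rmin 0 (PI/2) <= s <= Rmax 0 (PI/2) ->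
     is_derive (fun s => 128/PI * FK K t0 s) s (128/PI * dfK K t0 s)).
  { intros s Hs. rewrite Rmin_left, Rmax_right in Hs by lra.
    apply is_derive_scal. apply der; auto. specialize (Hc s Hs). lra. }
  assert (Hcont : forall s, Rmin 0 (PI/2) <= s <= Rmax 0 (PI/2) ->
     continuous (fun s => 128/PI * dfK K t0 s) s).
  { intros s Hs. rewrite Rmin_left, Rmax_right in Hs by lra.
    specialize (Hc s Hs).
    apply (@ex_derive_continuous R_AbsRing R_NormedModule). unfold dfK. auto_derive.
    change (s * / 2) with (s / 2).
    set (c := cos (s/2)) in *. set (si := sin (s/2)) in *.
    assert (0 <= (si * / c + - t0) * ((si * / c + - t0) * 1)) by (rewrite Rmult_1_r; apply Rle_0_sqr).
    split; [lra|]. split; [nra|]. split; [nra|auto]. }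
  pose proof (is_RInt_derive _ _ _ _ Hder Hcont) as HI.
  eapply Rle_trans.
  apply RInt_le.
  - lra.
  - apply (@ex_RInt_continuous R_CompleteNormedModule). intros; apply integrand_cont.
  - eexists; exact HI.
  - intros s Hs.
    assert (Hs' : 0 <= s <= PI/2) by lra.
    specialize (Hc s Hs').
    set (c := cos (s/2)) in *. set (si := sin (s/2)) in *.
    assert (Hcs : cos s = 2 * c * c - 1).
    { replace s with (2 * (s/2)) at 1 by field. apply cos_2a_cos. }
    assert (Hcs0 : 0 <= cos s) by (apply cos_ge_0; lra).
    assert (Hsi : 0 <= si) by (apply sin_ge_0; lra).
    assert (Hp := sin2_cos2 (s/2)). unfold Rsqr in Hp. fold c si in Hp.
    set (T := si / c).
    assert (HT0 : 0 <= T) by (unfold T; apply Rdiv_le_0_compat; lra).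
    assert (HT1 : T <= 1).
    { unfold T. apply (Rmult_le_reg_r c); auto. unfold Rdiv. rewrite Rmult_assoc, Rinv_l by lra. nra. }
    assert (Hw : u - v * cos s = c * c * ((u - v) + (u + v) * T^2)).
    { rewrite Hcs. unfold T. assert (Hsc : si * si = 1 - c * c) by lra. field_simplify_eq; [|lra]. replace (si^2) with (si*si) by ring. rewrite Hsc. ring. }

    specialize (Ht0 T (conj HT0 HT1)).
    assert (Hc2 : 1/2 <= c * c) by lra.
    assert (Hc21 : c * c <= 1) by nra.
    cut (exp (- (u - v * cos s) ^ 2) <= 128 * dfK K t0 s).
    { intros HH. unfold Rdiv. replace (128 * / PI * dfK K t0 s) with (128 * dfK K t0 s * / PI) by ring.
      apply Rmult_le_compat_r; auto. left; apply Rinv_0_lt_compat; lra. }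
    assert (E1 : exp (- (u - v * cos s) ^ 2) <= exp (- (((u - v) + (u + v) * T^2)^2 / 4))).
    { apply exp_mono. rewrite Hw.
      set (q := ((u - v) + (u + v) * T^2)^2).
      assert (0 <= q) by (unfold q; apply pow2_ge_0).
      replace ((c * c * (u - v + (u + v) * T ^ 2)) ^ 2) with ((c*c)^2 * q) by (unfold q; ring).
      assert (Hc4 : 1/4 <= (c*c)^2) by nra.
      assert (0 <= ((c*c)^2 - 1/4) * q) by (apply Rmult_le_pos; lra). lra. }
    eapply Rle_trans. exact E1. eapply Rle_trans. exact Ht0.
    fold K. unfold dfK. fold c si T.
    set (d := 1 + K * (T - t0)^2).
    assert (Hd : 0 < d) by (unfold d; pose proof (pow2_ge_0 (T - t0)); nra).
    assert (/ (2 * c^2) >= 1/2).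
    { apply Rle_ge. replace (1/2) with (/2) by field. apply Rinv_le_contravar. nra. nra. }
    unfold Rdiv. assert (0 < / d) by (apply Rinv_0_lt_compat; auto). nra.
  - rewrite (is_RInt_unique _ _ _ _ HI).
    unfold minus, plus, opp; simpl.
    unfold FK.
    pose proof (atan_bound (sqrt K * (sin (PI / 2 / 2) / cos (PI / 2 / 2) - t0))).
    pose proof (atan_bound (sqrt K * (sin (0 / 2) / cos (0 / 2) - t0))).
    set (x1 := atan (sqrt K * (sin (PI / 2 / 2) / cos (PI / 2 / 2) - t0))) in *.
    set (x0 := atan (sqrt K * (sin (0 / 2) / cos (0 / 2) - t0))) in *.
    replace (128 / PI * (x1 / sqrt K) + - (128 / PI * (x0 / sqrt K))) with
      ((128 / sqrt K) * ((x1 - x0) / PI)) by (field; lra).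
    rewrite <- (Rmult_1_r (128 / sqrt K)) at 2.
    apply Rmult_le_compat_l. unfold Rdiv; left; apply Rmult_lt_0_compat; [lra|apply Rinv_0_lt_compat; auto].
    apply (Rmult_le_reg_r PI); auto. unfold Rdiv. rewrite Rmult_assoc, Rinv_l by lra. lra.
Qed.

Theorem lemmaA4 :
  exists C : R, forall u v : R,
    RInt (fun s => exp (- (u - v * cos s) ^ 2) / PI) 0 PI
    <= C / sqrt ((Rabs (u + v) + 1) * (Rabs (u - v) + 1)).
Proof.
  exists 256. intros u v.
  set (g := fun s => exp (- (u - v * cos s) ^ 2) / PI).
  set (g' := fun s => exp (- (u - - v * cos s) ^ 2) / PI).
  assert (exg : forall a b, ex_RInt g a b).
  { intros a b. apply (@ex_RInt_continuous R_CompleteNormedModule). intros; apply integrand_cont. }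
  assert (exg' : forall a b, ex_RInt g' a b).
  { intros a b. apply (@ex_RInt_continuous R_CompleteNormedModule). intros; apply integrand_cont. }
  pose proof PI_RGT_0 as HPI.
  rewrite <- (RInt_Chasles g 0 (PI/2) PI) by auto.
  pose proof (RInt_comp_lin g (-1) PI 0 (PI/2) (exg _ _)) as Hc.
  replace (-1 * 0 + PI) with PI in Hc by ring.
  replace (-1 * (PI/2) + PI) with (PI/2) in Hc by field.
  rewrite <- (opp_RInt_swap g) in Hc by auto.
  assert (E : RInt (fun y => scal (-1) (g (-1 * y + PI))) 0 (PI/2) = RInt (fun y => scal (-1) (g' y)) 0 (PI/2)).
  { apply RInt_ext. intros x _. unfold g, g'.
    replace (-1 * x + PI) with (PI - x) by ring. rewrite Rtrigo_facts.cos_pi_minus.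
    replace (u - - v * cos x) with (u - v * - cos x) by ring. reflexivity. }
  assert (Hc2 : RInt (fun y => scal (-1) (g' y)) 0 (PI/2) = opp (RInt g (PI/2) PI)).
  { etransitivity; [symmetry; exact E | exact Hc]. }
  rewrite (@RInt_scal R_CompleteNormedModule) in Hc2 by auto.
  change (-1 * RInt g' 0 (PI/2) = - RInt g (PI/2) PI) in Hc2. rename Hc2 into Hc3.
  assert (H2 : RInt g (PI/2) PI = RInt g' 0 (PI/2)) by (clear -Hc3; lra).
  change (RInt g 0 (PI/2) + RInt g (PI/2) PI <= 256 / sqrt ((Rabs (u + v) + 1) * (Rabs (u - v) + 1))).
  rewrite H2.
  pose proof (half u v) as A1. pose proof (half u (-v)) as A2.
  fold g in A1. fold g' in A2.
  replace (u - - v) with (u + v) in A2 by ring.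
  replace (u + - v) with (u - v) in A2 by ring.
  rewrite Rmult_comm in A1.
  unfold Rdiv in *. lra.
Qed.
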